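(* Let $\vec{\mathcal{G}}$ be a game graph with Min vertices $[n]$ satisfying assumptions (a)–(c), and assume moreover that every Random vertex has exactly two outgoing edges, each with probability $1/2$, and that every edge outgoing from a Random vertex has a Max vertex as its head. Let $F$ be the operator encoded by $\vec{\mathcal{G}}$, extended to $\mathbb{T}^n$ by the same formula (with $-\infty+a=-\infty$, $\tfrac12\cdot(-\infty)=-\infty$, and only terms with $p^e_w>0$, $p^{e'}_u>0$ kept in the sums). Then $\{x\in\mathbb{T}^n: x\le F(x)\}$ is a tropical Metzler spectrahedral cone, i.e. equals $\mathcal{S}(-\infty\,|\,Q^{(1)},\dots,Q^{(n)})$ for some symmetric tropical Metzler matrices $Q^{(1)},\dots,Q^{(n)}$ (with $Q^{(0)}$ the matrix all of whose entries are $(0,-\infty)$).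
   Context: Game graph: directed graph $(V,E)$, $V=V_{\mathrm{Min}}\uplus V_{\mathrm{Rand}}\uplus V_{\mathrm{Max}}$, $V_{\mathrm{Min}}=[n]$, $V_{\mathrm{Max}}=[m]$ nonempty, each vertex with an outgoing edge; $\mathrm{Out}(v)$ = outgoing edges. Edges with Min/Max tail carry reals $r_e$; edges with Random tail carry rationals $q_e>0$ summing to $1$ at each Random vertex. Assumptions: (a) every path between two Min vertices contains a Max vertex; (b) every path between two Max vertices contains a Min vertex; (c) every Random vertex has a path to a Min or Max vertex. With the Markov chain where Min/Max vertices are absorbing and Random $v$ moves to $w$ with probability $q_{(v,w)}$, $p^e_v$ is the probability of absorption at $v$ starting from the head of $e$. Encoded operator: $F_v(x)=\min_{e\in\mathrm{Out}(v)}\big(r_e+\sum_{w\in[m]}p^e_w\max_{e'\in\mathrm{Out}(w)}(r_{e'}+\sum_{u\in[n]}p^{e'}_u x_u)\big)$. $\mathbb{T}=\mathbb{R}\cup\{-\infty\}$. Signed tropical numbers $\mathbb{S}=(\{\pm1\}\times\mathbb{R})\cup\{(0,-\infty)\}$; $(1,a)$ positive, $(-1,a)$ negative, modulus $|(s,a)|=a$. A matrix over $\mathbb{S}$ is tropical Metzler if its off-diagonal entries are negative or $(0,-\infty)$. For symmetric tropical Metzler $Q^{(0)},\dots,Q^{(N)}\in\mathbb{S}^{m'\times m'}$, with $x_0:=0$ and $x\in\mathbb{T}^N$: $Q^{\pm}_{ii}(x)=\max\{|Q^{(k)}_{ii}|+x_k: Q^{(k)}_{ii}\text{ positive (resp.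 negative)}\}$ ($\max\emptyset=-\infty$), $Q_{ij}(x)=\max_k(|Q^{(k)}_{ij}|+x_k)$ for $i\ne j$; $\mathcal{S}(Q^{(0)}|Q^{(1)},\dots,Q^{(N)})=\{x\in\mathbb{T}^N: Q^+_{ii}(x)\ge Q^-_{ii}(x)\ \forall i,\ Q^+_{ii}(x)+Q^+_{jj}(x)\ge2Q_{ij}(x)\ \forall i\ne j\}$. *)

(* Defs.v *)
From HB Require Import structures.
From mathcomp Require Import all_boot all_order all_algebra.
Set Implicit Arguments. Unset Strict Implicit. Unset Printing Implicit Defensive.
Import Order.TTheory GRing.Theory Num.Theory.
Local Open Scope ring_scope.

Section Trop.
Variable R : realFieldType.

Definition Trop := option R.   (* None = -oo *)

Definition Tadd (x y : Trop) : Trop :=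
  match x, y with Some a, Some b => Some (a + b) | _, _ => None end.
Definition Tscale (c : R) (x : Trop) : Trop := omap (fun a => c * a) x.
Definition Tmax (x y : Trop) : Trop :=
  match x, y with
  | None, _ => y | _, None => x | Some a, Some b => Some (Num.max a b) end.
Definition Tmin (x y : Trop) : Trop :=
  match x, y with Some a, Some b => Some (Num.min a b) | _, _ => None end.
Definition Tle (x y : Trop) : bool :=
  match x, y with
  | None, _ => true | Some _, None => false | Some a, Some b => a <= b end.
Definition Tmaxseq (s : seq Trop) : Trop := foldr Tmax None s.
(* min of a finite nonempty sequence (-oo for the empty one, never used) *)
Definition Tminseq (s : seq Trop) : Trop :=
  match s with [::] => None | x :: s' => foldr Tmin x s' end.

Inductive Strop : Type :=
| Spos of R     (* (1, a)  *)
| Sneg of R     (* (-1, a) *)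
| Szero.        (* (0, -oo) *)

Definition Smod (s : Strop) : Trop :=
  match s with Spos a => Some a | Sneg a => Some a | Szero => None end.
Definition Sis_pos (s : Strop) : bool := if s is Spos _ then true else false.
Definition Sis_neg (s : Strop) : bool := if s is Sneg _ then true else false.
Definition Sis_zero (s : Strop) : bool := if s is Szero then true else false.

Definition Ssym (m' : nat) (Q : 'I_m' -> 'I_m' -> Strop) : Prop :=
  forall i j, Q i j = Q j i.
Definition Smetzler (m' : nat) (Q : 'I_m' -> 'I_m' -> Strop) : Prop :=
  forall i j, i != j -> Sis_neg (Q i j) || Sis_zero (Q i j).

(* Q^{+}_{ii}(x) / Q^{-}_{ii}(x), with x_0 := 0 for the matrix Q0 *)
Definition Qdiag (sgn : Strop -> bool) (N m' : nat)
  (Q0 : 'I_m' -> 'I_m' -> Strop) (Qs : 'I_N -> 'I_m' -> 'I_m' -> Strop)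
  (x : 'I_N -> Trop) (i : 'I_m') : Trop :=
  Tmax (if sgn (Q0 i i) then Tadd (Smod (Q0 i i)) (Some 0) else None)
       (\big[Tmax/None]_(k | sgn (Qs k i i)) Tadd (Smod (Qs k i i)) (x k)).

Definition Qoff (N m' : nat)
  (Q0 : 'I_m' -> 'I_m' -> Strop) (Qs : 'I_N -> 'I_m' -> 'I_m' -> Strop)
  (x : 'I_N -> Trop) (i j : 'I_m') : Trop :=
  Tmax (Tadd (Smod (Q0 i j)) (Some 0))
       (\big[Tmax/None]_k Tadd (Smod (Qs k i j)) (x k)).

Definition in_spec (N m' : nat)
  (Q0 : 'I_m' -> 'I_m' -> Strop) (Qs : 'I_N -> 'I_m' -> 'I_m' -> Strop)
  (x : 'I_N -> Trop) : Prop :=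
  (forall i, Tle (Qdiag Sis_neg Q0 Qs x i) (Qdiag Sis_pos Q0 Qs x i)) /\
  (forall i j, i != j ->
     Tle (Tadd (Qoff Q0 Qs x i j) (Qoff Q0 Qs x i j))
         (Tadd (Qdiag Sis_pos Q0 Qs x i) (Qdiag Sis_pos Q0 Qs x j))).
End Trop.

Arguments Szero {R}.

Definition vtx (n nr m : nat) : finType := (('I_n + 'I_nr) + 'I_m)%type.

Definition vmin {n nr m} (i : 'I_n) : vtx n nr m := inl (inl i).
Definition vrand {n nr m} (j : 'I_nr) : vtx n nr m := inl (inr j).
Definition vmax {n nr m} (w : 'I_m) : vtx n nr m := inr w.

Definition is_min {n nr m} (v : vtx n nr m) : bool :=
  match v with inl (inl _) => true | _ => false end.
Definition is_rand {n nr m} (v : vtx n nr m) : bool :=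
  match v with inl (inr _) => true | _ => false end.
Definition is_max {n nr m} (v : vtx n nr m) : bool :=
  match v with inr _ => true | _ => false end.

(* E : edge relation; q : probabilities on edges with Random tail. *)
Definition game_graph (n nr m : nat) (E : rel (vtx n nr m))
  (q : vtx n nr m -> vtx n nr m -> rat) : Prop :=
  [/\ ((0 < n)%N /\ (0 < m)%N),
      (forall v, exists w, E v w),
      (forall v w, is_rand v -> E v w -> 0 < q v w),
      (forall v, is_rand v -> \sum_(w | E v w) q v w = 1) &
  [/\ (* (a) every path between two Min vertices contains a Max vertex *)
      (forall v s, is_min v -> s != [::] -> path E v s -> is_min (last v s) ->
                   has is_max s),
      (* (b) every path between two Max vertices contains a Min vertex *)
      (forall v s, is_max v -> s != [::] -> path E v s -> is_max (last v s) ->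
                   has is_min s) &
      (* (c) every Random vertex has a path to a Min or Max vertex *)
      (forall v, is_rand v -> exists s, (path E v s && ~~ is_rand (last v s)))]].

(* p h w = probability of absorption at w, starting at h, in the Markov chain
   where Min/Max vertices are absorbing and Random v moves to w w.p. q v w.
   Characterized by the (first-step) absorption equations; under (c) this
   linear system has a unique solution. p^e_w := p (head e) w. *)
Definition absorption (n nr m : nat) (E : rel (vtx n nr m))
  (q p : vtx n nr m -> vtx n nr m -> rat) : Prop :=
  forall h w, p h w = if is_rand h then \sum_(v | E h v) q h v * p v w
                      else (h == w)%:R.

Definition Fop (R : realFieldType) (n nr m : nat) (E : rel (vtx n nr m))
  (r : vtx n nr m -> vtx n nr m -> R) (p : vtx n nr m -> vtx n nr m -> rat)
  (x : 'I_n -> Trop R) (i : 'I_n) : Trop R :=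
  Tminseq
    [seq Tadd (Some (r (vmin i) h))
        (\big[@Tadd R/Some 0]_(w : 'I_m | 0 < p h (vmax w))
            Tscale (ratr (p h (vmax w)))
              (Tmaxseq
                 [seq Tadd (Some (r (vmax w) h'))
                     (\big[@Tadd R/Some 0]_(u : 'I_n | 0 < p h' (vmin u))
                         Tscale (ratr (p h' (vmin u))) (x u))
                 | h' <- enum (vtx n nr m) & E (vmax w) h']))
    | h <- enum (vtx n nr m) & E (vmin i) h].

(* Main.v *)
Require Import Defs.
From HB Require Import structures.
From mathcomp Require Import all_boot all_order all_algebra.
From mathcomp Require Import lra.
Set Implicit Arguments. Unset Strict Implicit. Unset Printing Implicit Defensive.
Import Order.TTheory GRing.Theory Num.Theory.
Local Open Scope ring_scope.

Section TropLemmas.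
Variable R : realFieldType.
Implicit Types x y z : Trop R.

Lemma TaddA : associative (@Tadd R).
Proof. by case=> [a|] [b|] [c|] //=; rewrite addrA. Qed.
Lemma TaddC : commutative (@Tadd R).
Proof. by case=> [a|] [b|] //=; rewrite addrC. Qed.
Lemma Tadd0 : left_id (Some 0) (@Tadd R).
Proof. by case=> [a|] //=; rewrite add0r. Qed.
HB.instance Definition _ := Monoid.isComLaw.Build (Trop R) (Some 0) (@Tadd R) TaddA TaddC Tadd0.

Lemma TmaxA : associative (@Tmax R).
Proof. by case=> [a|] [b|] [c|] //=; rewrite maxA. Qed.
Lemma TmaxC : commutative (@Tmax R).
Proof. by case=> [a|] [b|] //=; rewrite maxC. Qed.
Lemma Tmax0 : left_id None (@Tmax R).
Proof. by case. Qed.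
HB.instance Definition _ := Monoid.isComLaw.Build (Trop R) None (@Tmax R) TmaxA TmaxC Tmax0.

Lemma Tadd_Tmax c y z : Tadd (Some c) (Tmax y z) = Tmax (Tadd (Some c) y) (Tadd (Some c) z).
Proof. by case: y z => [a|] [b|] //=; rewrite addr_maxr. Qed.

Lemma Tle_min x y z : Tle x (Tmin y z) = Tle x y && Tle x z.
Proof. case: x y z => [a|] [b|] [c|] //=; by rewrite ?andbF // le_min. Qed.

Lemma Tle_dbl x y : Tle (Tadd x x) (Tadd y y) = Tle x y.
Proof. case: x y => [a|] [b|] //=. apply/idP/idP => H; lra. Qed.

Lemma Tle_minseq x s : s != [::] ->
  Tle x (Tminseq s) = all (Tle x) s.
Proof.
case: s => [|a s] //= _; elim: s => [|b s IH] /=; first by rewrite andbT.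
by rewrite Tle_min IH andbCA.
Qed.

Lemma Tmaxseq_big s : Tmaxseq s = \big[@Tmax R/None]_(y <- s) y.
Proof. by elim: s => [|a s IH]; rewrite ?big_nil ?big_cons //= IH. Qed.

Lemma Tle_half y c g1 g2 :
  Tle y (Tadd (Some c) (Tadd (Tscale (ratr (2%:R^-1 : rat)) g1) (Tscale (ratr (2%:R^-1 : rat)) g2)))
  = Tle (Tadd y y) (Tadd (Tadd (Some c) g1) (Tadd (Some c) g2)).
Proof.
case: y g1 g2 => [a|] [b1|] [b2|] //=.
rewrite fmorphV /= ratr_nat.
apply/idP/idP => H; lra.
Qed.

Lemma Tscale1 y : Tscale (ratr (1 : rat)) y = y.
Proof. by case: y => [a|] //=; rewrite rmorph1 mul1r. Qed.

End TropLemmas.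
Section Game.
Variables (R : realFieldType) (n nr m : nat).
Local Notation V := (vtx n nr m).
Local Notation TT := ('I_n * V * 'I_m * 'I_m * bool)%type.
Variables (E : rel V) (q : V -> V -> rat) (r : V -> V -> R) (p : V -> V -> rat).
Hypotheses (Hg : game_graph E q) (Hp : absorption E q p)
  (Hr : forall v, is_rand v ->
     #|[pred w | E v w]| = 2%N /\
     (forall w, E v w -> q v w = 2%:R^-1 /\ is_max w)).

Lemma succ_min i v : E (vmin i) v -> ~~ is_min v.
Proof.
move=> Ev; apply/negP => mv.
case: Hg => _ _ _ _ [Ha _ _].
have := Ha (vmin i) [:: v] isT isT.
rewrite /= Ev mv => /(_ isT isT).
by case: v mv Ev => [[]|].
Qed.

Lemma succ_max w v : E (vmax w) v -> is_min v.
Proof.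
case: Hg => _ Hex _ _ [_ Hb _].
case: v => [[u|j]|w'] Ev //.
- have [w'' Ew''] := Hex (vrand j).
  have [_ /(_ _ Ew'') [_ mw'']] := Hr (v:=vrand j) isT.
  have := Hb (vmax w) [:: vrand j; w''] isT isT.
  rewrite /= Ev Ew'' mw'' => /(_ isT isT).
  by case: w'' mw'' {Ew''} => [[]|].
- have := Hb (vmax w) [:: vmax w'] isT isT.
  by rewrite /= Ev => /(_ isT isT).
Qed.

Lemma p_nonrand v w : ~~ is_rand v -> p v w = (v == w)%:R.
Proof. by move=> nv; rewrite Hp (negbTE nv). Qed.

Lemma sum_ind (h x : V) : \sum_(v | E h v) ((v == x)%:R : rat) = (E h x)%:R.
Proof.
case Ehx: (E h x).
  rewrite (bigD1 x) //= eqxx big1 ?addr0 // => v /andP[_ /negbTE ->] //.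
by rewrite big1 // => v Ev; case: eqP => // evx; rewrite -evx Ev in Ehx.
Qed.

Lemma p_rand h w : is_rand h -> p h (vmax w) = (E h (vmax w))%:R / 2%:R.
Proof.
move=> rh; rewrite Hp rh.
have [_ Hq] := Hr rh.
rewrite (eq_bigr (fun v => 2%:R^-1 * (v == vmax w)%:R)); last first.
  move=> v Ev; have [-> mv] := Hq v Ev; rewrite p_nonrand //.
  by case: v mv {Ev}.
by rewrite -mulr_sumr sum_ind mulrC.
Qed.


Section X.
Variable x : 'I_n -> Trop R.

Definition Gw (w : 'I_m) : Trop R :=
  Tmaxseq
    [seq Tadd (Some (r (vmax w) h'))
        (\big[@Tadd R/Some 0]_(u : 'I_n | 0 < p h' (vmin u))
            Tscale (ratr (p h' (vmin u))) (x u))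
    | h' <- enum V & E (vmax w) h'].

Definition Sh (h : V) : Trop R :=
  \big[@Tadd R/Some 0]_(w : 'I_m | 0 < p h (vmax w))
     Tscale (ratr (p h (vmax w))) (Gw w).

Lemma Fop_eq i : Fop E r p x i =
  Tminseq [seq Tadd (Some (r (vmin i) h)) (Sh h) | h <- enum V & E (vmin i) h].
Proof. by []. Qed.

Definition Hf (c : R) (w : 'I_m) : Trop R :=
  \big[@Tmax R/None]_(u | E (vmax w) (vmin u)) Tadd (Some (c + r (vmax w) (vmin u))) (x u).

Lemma vmin_eq (u u' : 'I_n) : (vmin u == vmin u' :> V) = (u == u').
Proof. by apply/eqP/eqP => [[]|->]. Qed.
Lemma vmax_eq (u u' : 'I_m) : (vmax u == vmax u' :> V) = (u == u').
Proof. by apply/eqP/eqP => [[]|->]. Qed.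

Lemma big_restrict_min (F : V -> Trop R) (P : pred V) :
  (forall v, P v -> is_min v) ->
  \big[@Tmax R/None]_(v | P v) F v = \big[@Tmax R/None]_(u | P (vmin u)) F (vmin u).
Proof.
move=> HP; rewrite big_mkcond !big_sumType.
have -> : \big[@Tmax R/None]_(j : 'I_m) (if P (inr j) then F (inr j) else None) = None.
  by apply: big1 => j _; case: ifP => // /HP.
have -> : \big[@Tmax R/None]_(j : 'I_nr) (if P (inl (inr j)) then F (inl (inr j)) else None) = None.
  by apply: big1 => j _; case: ifP => // /HP.
by rewrite !Monoid.mulm1 [in RHS]big_mkcond.
Qed.

Lemma Gw_eq w : Gw w =
  \big[@Tmax R/None]_(u | E (vmax w) (vmin u)) Tadd (Some (r (vmax w) (vmin u))) (x u).
Proof.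
rewrite /Gw Tmaxseq_big big_map big_filter big_enum_cond.
rewrite (eq_bigl (fun v => E (vmax w) v)) //.
rewrite big_restrict_min; last by move=> v; apply: succ_max.
apply: eq_bigr => u _.
congr Tadd.
rewrite (big_pred1_id _ _ (i:=u)); last first.
  by move=> u'; rewrite /= p_nonrand // vmin_eq eq_sym; case: (u' == u); rewrite /= ?ltr01 ?ltxx.
by rewrite p_nonrand // eqxx Tscale1 TaddC Tadd0.
Qed.

Lemma Hf_eq c w : Hf c w = Tadd (Some c) (Gw w).
Proof.
rewrite Gw_eq (big_endo (fun y => Tadd (Some c) y)) //; last exact: Tadd_Tmax.
by apply: eq_bigr => u _; case: (x u) => //= a; rewrite addrA.
Qed.

Lemma Sh_max w0 : Sh (vmax w0) = Gw w0.
Proof.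
rewrite /Sh (big_pred1_id _ _ (i:=w0)); last first.
  by move=> w; rewrite /= p_nonrand // vmax_eq eq_sym; case: (w == w0); rewrite /= ?ltr01 ?ltxx.
by rewrite p_nonrand // eqxx Tscale1 TaddC Tadd0.
Qed.

Lemma rand_third h w1 w2 w : is_rand h -> E h (vmax w1) -> E h (vmax w2) -> w1 != w2 ->
  E h (vmax w) -> (w == w1) || (w == w2).
Proof.
move=> rh E1 E2 n12 Ew; apply/negPn/negP; rewrite negb_or => /andP[n1 n2].
have [c2 _] := Hr rh.
have : (size ([:: vmax w1; vmax w2; vmax w] : seq V) <= size (enum [pred v | E h v]))%N.
  apply: uniq_leq_size.
    by rewrite /= !inE !vmax_eq negb_or n12 eq_sym n1 eq_sym n2.
  by move=> v; rewrite !inE mem_enum => /or3P[] /eqP ->; rewrite inE.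
by rewrite -cardE c2.
Qed.

Lemma rand_pair h : is_rand h -> exists w1 w2,
  [/\ E h (vmax w1), E h (vmax w2) & w1 != w2].
Proof.
move=> rh; have [c2 Hq] := Hr rh.
have := enum_uniq [pred v | E h v].
have : forall v, v \in enum [pred v | E h v] -> E h v by move=> v; rewrite mem_enum.
move: c2; rewrite cardE.
case: (enum _) => [|a [|b [|]]] //= _ Hm.
have Ea := Hm a (mem_head _ _); have Eb : E h b by apply: Hm; rewrite !inE eqxx orbT.
have [_ ma] := Hq a Ea; have [_ mb] := Hq b Eb.
case: a ma Ea Hm => [[]//|w1] _ Ea Hm; case: b mb Eb Hm => [[]//|w2] _ Eb Hm.
rewrite !inE vmax_eq andbT => n12.
by exists w1, w2.
Qed.

Lemma Sh_rand h w1 w2 : is_rand h -> E h (vmax w1) -> E h (vmax w2) -> w1 != w2 ->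
  Sh h = Tadd (Tscale (ratr (2%:R^-1 : rat)) (Gw w1)) (Tscale (ratr (2%:R^-1 : rat)) (Gw w2)).
Proof.
move=> rh E1 E2 n12.
have HP w : (0 < p h (vmax w)) = (w == w1) || (w == w2).
  rewrite p_rand //; case Ew: (E h (vmax w)).
    by rewrite (rand_third rh E1 E2 n12 Ew) mul1r invr_gt0 ltr0n.
  rewrite mul0r ltxx; apply/esym/negbTE; apply/negP => /orP[]/eqP ew; subst w.
    by rewrite E1 in Ew.
  by rewrite E2 in Ew.
have Hv w : (w == w1) || (w == w2) -> p h (vmax w) = 2%:R^-1.
  by move=> /orP[]/eqP ->; rewrite p_rand // ?E1 ?E2 /= mulr1n mul1r.
rewrite /Sh (eq_bigl (fun w => (w == w1) || (w == w2))) // (bigD1 w1) ?eqxx //= (bigD1 w2) ?eqxx ?orbT //=.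
rewrite big1 ?Tadd0; last first.
  by move=> w /andP[/andP[o n1] n2]; move: o n1 n2; case: (w == w1); case: (w == w2).
  rewrite !Hv ?eqxx ?orbT // [Tadd _ (Some 0)]TaddC Tadd0 //.
by rewrite eq_sym.
Qed.

Definition act (i : 'I_n) (h : V) (w1 w2 : 'I_m) : bool :=
  E (vmin i) h && (((h == vmax w1) && (w1 == w2)) ||
                   [&& is_rand h, E h (vmax w1), E h (vmax w2) & w1 != w2]).

Definition Cc (i : 'I_n) (h : V) (w1 w2 : 'I_m) : bool :=
  Tle (Tadd (x i) (x i)) (Tadd (Hf (r (vmin i) h) w1) (Hf (r (vmin i) h) w2)).

Lemma per_h i h : E (vmin i) h ->
  Tle (x i) (Tadd (Some (r (vmin i) h)) (Sh h)) <->
  (forall w1 w2, act i h w1 w2 -> Cc i h w1 w2).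
Proof.
move=> Eh; rewrite /Cc.
case: h Eh => [[u|j]|w0] Eh.
- by have := succ_min Eh.
- have [a [b [Ea Eb nab]]] := rand_pair (h:=vrand j) isT.
  split.
  + move=> H w1 w2; rewrite /act Eh andTb orFb => /and4P[_ E1 E2 n12].
    by rewrite !Hf_eq -Tle_half -(Sh_rand (h:=vrand j) isT E1 E2 n12).
  + move=> H; have := H a b; rewrite /act Eh Ea Eb nab !Hf_eq -Tle_half.
    by rewrite -(Sh_rand (h:=vrand j) isT Ea Eb nab); apply.
- rewrite Sh_max; split.
  + move=> H w1 w2; rewrite /act Eh vmax_eq andTb orbF => /andP[/eqP <- /eqP <-].
    by rewrite Tle_dbl Hf_eq.
  + by move=> H; have := H w0 w0; rewrite /act Eh !eqxx Tle_dbl Hf_eq; apply.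
Qed.

Lemma partA : (forall i, Tle (x i) (Fop E r p x i)) <->
  (forall i h w1 w2, act i h w1 w2 -> Cc i h w1 w2).
Proof.
have ne i : [seq Tadd (Some (r (vmin i) h)) (Sh h) | h <- enum V & E (vmin i) h] != [::].
  case: Hg => _ Hex _ _ _; have [v Ev] := Hex (vmin i).
  apply/negP => /eqP e.
  have : Tadd (Some (r (vmin i) v)) (Sh v) \in
      [seq Tadd (Some (r (vmin i) h)) (Sh h) | h <- enum V & E (vmin i) h].
    by apply: map_f; rewrite mem_filter Ev mem_enum.
  by rewrite e.
split.
- move=> H i h w1 w2 A.
  have Eh : E (vmin i) h by case/andP: A.
  apply: (proj1 (per_h Eh)) A.
  have := H i; rewrite Fop_eq Tle_minseq // all_map all_filter => /allP/(_ h).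
  by rewrite mem_enum /= Eh; apply.
- move=> H i; rewrite Fop_eq Tle_minseq // all_map all_filter; apply/allP => h _ /=.
  apply/implyP => Eh; apply/(per_h Eh) => w1 w2; exact: H.
Qed.


Definition ti (t : TT) := t.1.1.1.1.
Definition th (t : TT) := t.1.1.1.2.
Definition ws (t : TT) := if t.2 then t.1.2 else t.1.1.2.
Definition actT (t : TT) := act (ti t) (th t) t.1.1.2 t.1.2.

Definition Qt (k : 'I_n) (t t' : TT) : Strop R :=
  if t == t' then
    (if actT t && E (vmax (ws t)) (vmin k)
     then Spos (r (vmin (ti t)) (th t) + r (vmax (ws t)) (vmin k)) else Szero)
  else if [&& t.1 == t'.1, actT t & k == ti t] then Sneg 0 else Szero.

Lemma Qt_sym k t t' : Qt k t t' = Qt k t' t.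
Proof.
rewrite /Qt eq_sym; case: eqP => [->|_] //.
rewrite eq_sym; case: eqP => //= e.
by rewrite /actT /ti /th e.
Qed.

Lemma Qt_metz k t t' : t != t' -> Sis_neg (Qt k t t') || Sis_zero (Qt k t t').
Proof. by rewrite /Qt => /negbTE ->; case: ifP. Qed.

Lemma Dneg t : \big[@Tmax R/None]_(k | Sis_neg (Qt k t t)) Tadd (Smod (Qt k t t)) (x k) = None.
Proof. by rewrite big_pred0 // => k; rewrite /Qt eqxx; case: ifP. Qed.

Lemma Dpos t : \big[@Tmax R/None]_(k | Sis_pos (Qt k t t)) Tadd (Smod (Qt k t t)) (x k) =
  if actT t then Hf (r (vmin (ti t)) (th t)) (ws t) else None.
Proof.
rewrite /Qt eqxx; case: (actT t) => /=; last by rewrite big_pred0.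
by apply: eq_big => // k; case: ifP.
Qed.

Lemma Doff t t' : t != t' ->
  \big[@Tmax R/None]_k Tadd (Smod (Qt k t t')) (x k) =
  if (t.1 == t'.1) && actT t then x (ti t) else None.
Proof.
move=> ntt; rewrite /Qt (negbTE ntt).
case: ifP => [/andP[e a]|nea].
  rewrite (bigD1 (ti t)) //= e a eqxx /= big1 ?Monoid.mulm1.
    by case: (x (ti t)) => //= b; rewrite add0r.
  by move=> k /negbTE ->.
by apply: big1 => k _; rewrite andbA nea.
Qed.

Lemma Qdiag_eq (sgn : Strop R -> bool) N m' (Qs : 'I_N -> 'I_m' -> 'I_m' -> Strop R)
  (y : 'I_N -> Trop R) a : sgn Szero = false ->
  Qdiag sgn (fun _ _ => Szero) Qs y a =
  \big[@Tmax R/None]_(k | sgn (Qs k a a)) Tadd (Smod (Qs k a a)) (y k).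
Proof. by rewrite /Qdiag => ->. Qed.

Lemma Qoff_eq N m' (Qs : 'I_N -> 'I_m' -> 'I_m' -> Strop R) (y : 'I_N -> Trop R) a b :
  Qoff (fun _ _ => Szero) Qs y a b =
  \big[@Tmax R/None]_k Tadd (Smod (Qs k a b)) (y k).
Proof. by []. Qed.

Lemma partB :
  in_spec (fun _ _ => Szero) (fun k (a b : 'I_#|{: TT}|) => Qt k (enum_val a) (enum_val b)) x <->
  (forall i h w1 w2, act i h w1 w2 -> Cc i h w1 w2).
Proof.
rewrite /in_spec; split.
- case=> _ Hoff i h w1 w2 A.
  pose t : TT := ((((i, h), w1), w2), false).
  pose t' : TT := ((((i, h), w1), w2), true).
  have ntt : t != t' by apply/eqP => -[].
  have := Hoff (enum_rank t) (enum_rank t').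
  rewrite (inj_eq enum_rank_inj) ntt => /(_ isT).
  rewrite Qoff_eq !Qdiag_eq // !enum_rankK Doff // !Dpos /= /actT /ti /th /= A eqxx.
  by [].
- move=> H; split.
    by move=> a; rewrite !Qdiag_eq // Dneg.
  move=> a b nab; rewrite Qoff_eq !Qdiag_eq //.
  have ntt : enum_val a != enum_val b by rewrite (inj_eq enum_val_inj).
  rewrite Doff // !Dpos.
  move: ntt; case: (enum_val a) => u s; case: (enum_val b) => u' s' ntt.
  case: ifP => //= /andP[/eqP e A]; subst u'.
  move: A ntt; rewrite /actT /ti /th /ws /=.
  case: u => [[[i h] w1] w2] /= A.
  have := H _ _ _ _ A; rewrite /Cc A.
  by case: s; case: s' => //= C; rewrite ?eqxx //= => _; rewrite // TaddC.
Qed.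

End X.
Lemma main_sec :
  exists (m' : nat) (Q : 'I_n -> 'I_m' -> 'I_m' -> Strop R),
    (forall k, Ssym (Q k)) /\ (forall k, Smetzler (Q k)) /\
    (forall x : 'I_n -> Trop R,
       (forall i, Tle (x i) (Fop E r p x i)) <->
       in_spec (fun _ _ => Szero) Q x).
Proof.
exists #|{: TT}|, (fun k (a b : 'I_#|{: TT}|) => Qt k (enum_val a) (enum_val b)).
split; [|split].
- by move=> k a b; apply: Qt_sym.
- by move=> k a b nab; apply: Qt_metz; rewrite (inj_eq enum_val_inj).
- move=> x; rewrite partA partB; done.
Qed.

End Game.

Theorem mainTheorem13 (R : realFieldType) (n nr m : nat)
  (E : rel (vtx n nr m)) (q : vtx n nr m -> vtx n nr m -> rat)
  (r : vtx n nr m -> vtx n nr m -> R) (p : vtx n nr m -> vtx n nr m -> rat) :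
  game_graph E q ->
  absorption E q p ->
  (forall v, is_rand v ->
     #|[pred w | E v w]| = 2%N /\
     (forall w, E v w -> q v w = 2%:R^-1 /\ is_max w)) ->
  exists (m' : nat) (Q : 'I_n -> 'I_m' -> 'I_m' -> Strop R),
    (forall k, Ssym (Q k)) /\ (forall k, Smetzler (Q k)) /\
    (forall x : 'I_n -> Trop R,
       (forall i, Tle (x i) (Fop E r p x i)) <->
       in_spec (fun _ _ => Szero) Q x).
Proof. by move=> Hg Hp Hr; apply: (main_sec r Hg Hp Hr). Qed.
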